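(* Let $m>n$ be positive integers and let $G[V_1,V_2]$ be a balanced bipartite graph on $2(m+n-1)$ vertices (so $|V_1|=|V_2|=m+n-1$) with minimum degree $\delta(G)>\frac{3}{4}(m+n-1)$. Then for every red-blue coloring of the edges of $G$, either the red subgraph contains a connected $m$-matching or the blue subgraph contains a connected $n$-matching.
   Context: For a red-blue edge coloring of $G$, the red subgraph $G_R$ (resp. blue subgraph $G_B$) is the spanning subgraph of $G$ consisting of all red (resp. blue) edges. A connected $k$-matching in a graph $H$ is a matching with $k$ edges all of which lie in a single connected component of $H$. A red connected $k$-matching is a connected $k$-matching in $G_R$; similarly for blue. *)

(* Defs.v *)
From mathcomp Require Import all_boot.
Set Implicit Arguments. Unset Strict Implicit. Unset Printing Implicit Defensive.

Definition simple_graph (T : finType) (e : rel T) : Prop :=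
  symmetric e /\ irreflexive e.

Definition deg (T : finType) (e : rel T) (x : T) : nat := #|[set y | e x y]|.

Definition bipartite_parts (T : finType) (e : rel T) (V1 V2 : {set T}) : Prop :=
  [disjoint V1 & V2] /\ V1 :|: V2 = setT /\
  (forall x y, e x y -> (x \in V1) && (y \in V2) || (x \in V2) && (y \in V1)).

Definition is_matching (T : finType) (H : rel T) (M : {set T * T}) : Prop :=
  (forall p, p \in M -> H p.1 p.2) /\
  (forall p q, p \in M -> q \in M -> p != q ->
     [disjoint [set p.1; p.2] & [set q.1; q.2]]).

Definition connected_matching (T : finType) (H : rel T) (k : nat) : Prop :=
  exists M : {set T * T}, is_matching H M /\ #|M| = k /\
    exists r : T, forall p, p \in M -> connect H r p.1.

Definition red_sub (T : finType) (e : rel T) (c : T -> T -> bool) : rel T :=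
  fun x y => e x y && c x y.
Definition blue_sub (T : finType) (e : rel T) (c : T -> T -> bool) : rel T :=
  fun x y => e x y && ~~ c x y.

(* Main.v *)
Require Import Defs.
From mathcomp Require Import all_boot.
From mathcomp Require Import zify.
From Stdlib Require Classical_Prop.
Set Implicit Arguments. Unset Strict Implicit. Unset Printing Implicit Defensive.

Section Gen.
Variable T : finType.

Lemma cardU_le (A B : {set T}) : #|A :|: B| <= #|A| + #|B|.
Proof. have := cardsUI A B; lia. Qed.

Lemma card_sub2 (A B C : {set T}) : A \subset B :|: C -> #|A| <= #|B| + #|C|.
Proof. move=> h; apply: leq_trans (subset_leq_card h) (cardU_le _ _). Qed.

Lemma card_sub3 (A B C D : {set T}) : A \subset B :|: C :|: D -> #|A| <= #|B| + #|C| + #|D|.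
Proof.
move=> h; apply: leq_trans (subset_leq_card h) _.
apply: leq_trans (cardU_le _ _) _; have := cardU_le B C; lia.
Qed.

Lemma card_inter (A B U : {set T}) : A \subset U -> B \subset U -> #|A| + #|B| <= #|U| + #|A :&: B|.
Proof.
move=> hA hB; rewrite -cardsUI; rewrite leq_add2r; apply: subset_leq_card.
by rewrite subUset hA hB.
Qed.

Lemma card_split (J A B : {set T}) : [disjoint A & B] -> #|J :&: A| + #|J :&: B| <= #|J|.
Proof.
move=> d; rewrite -cardsUI.
have -> : (J :&: A) :&: (J :&: B) = set0.
  apply/setP => z; rewrite !inE; apply/negbTE; apply/negP => /andP [/andP [_ h1] /andP [_ h2]].
  by rewrite (disjointFr d h1) in h2.
rewrite cards0 addn0; apply: subset_leq_card; by rewrite subUset !subsetIl.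
Qed.

Lemma cardD_sub (A B : {set T}) : B \subset A -> #|A :\: B| = #|A| - #|B|.
Proof. by move=> h; rewrite cardsD (setIidPr h). Qed.

Lemma not_sub_card (X J : {set T}) : #|J| < #|X| -> exists x, (x \in X) && (x \notin J).
Proof.
move=> h; case: (boolP (X \subset J)) => [s|/subsetPn [x hx hn]]; last by exists x; rewrite hx.
by move: (subset_leq_card s); lia.
Qed.

Lemma subset_of_card (A : finType) (M : {set A}) k : k <= #|M| -> exists M' : {set A}, M' \subset M /\ #|M'| = k.
Proof.
move eq_t : (#|M| - k) => t; elim: t M eq_t => [|t IH] M eq_t hk.
  by exists M; split => //; lia.
have : 0 < #|M| by lia.
case/card_gt0P => x hx.
have e1 : #|M :\ x| - k = t by move: (cardsD1 x M); rewrite hx; lia.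
have e2 : k <= #|M :\ x| by move: (cardsD1 x M); rewrite hx; lia.
have [M' [s c]] := IH (M :\ x) e1 e2.
exists M'; split => //; apply: subset_trans s _; exact: subsetDl.
Qed.

Definition nbs (H : rel T) (S : {set T}) : {set T} := [set y | [exists x in S, H x y]].

Definition good (H : rel T) (X : {set T}) (M : {set T * T}) :=
  [/\ forall p, p \in M -> (p.1 \in X) && H p.1 p.2,
      forall p q, p \in M -> q \in M -> p.1 = q.1 -> p = q &
      forall p q, p \in M -> q \in M -> p.2 = q.2 -> p = q].

Lemma nbs0 (H : rel T) : nbs H set0 = set0.
Proof. apply/setP => y; rewrite !inE; apply/negbTE/existsP => [[x]]; by rewrite inE. Qed.

Lemma nbsP (H : rel T) (S : {set T}) y : reflect (exists2 x, x \in S & H x y) (y \in nbs H S).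
Proof.
rewrite inE; apply: (iffP existsP) => [[x /andP [a b]]|[x a b]]; first by exists x.
by exists x; rewrite a b.
Qed.

Lemma good_sub (H : rel T) X (M M' : {set T * T}) : good H X M -> M' \subset M -> good H X M'.
Proof.
move=> [a b c] /subsetP s; split => [p hp|p q hp hq|p q hp hq]; [exact: a (s _ hp)| exact: b (s _ hp) (s _ hq) | exact: c (s _ hp) (s _ hq)].
Qed.

Lemma hall_def s : forall (H : rel T) (X : {set T}) (d : nat), #|X| <= s ->
  (forall S : {set T}, S \subset X -> #|S| <= #|nbs H S| + d) ->
  exists M : {set T * T}, good H X M /\ #|X| <= #|M| + d.
Proof.
elim: s => [|s IH] H X d hX hS.
  exists set0; split; last by lia.
  by split => [p|p q|p q]; rewrite inE.
have [hle|hgt] := leqP #|X| s; first by apply: IH.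
case: (eqVneq (nbs H X) set0) => [hN|hN].
  have := hS X (subxx X); rewrite hN cards0 => hXd.
  exists set0; split; last by lia.
  by split => [p|p q|p q]; rewrite inE.
case: (boolP [exists S : {set T}, [&& S \subset X, S != set0, S != X & #|nbs H S| + d <= #|S|]]).
- case/existsP => S /and4P [sSX nS0 nSX tight].
  have cS : #|S| < #|X| by apply: proper_card; rewrite properEneq nSX sSX.
  have cS0 : 0 < #|S| by rewrite card_gt0; exact: nS0.
  have [M1 [[g1a g1b g1c] c1]] := IH H S d ltac:(lia) (fun S' h => hS S' (subset_trans h sSX)).
  pose H2 := fun a b => H a b && (b \notin nbs H S).
  have cXS : #|X :\: S| <= s by rewrite cardD_sub //; lia.
  have cond2 : forall S' : {set T}, S' \subset X :\: S -> #|S'| <= #|nbs H2 S'| + 0.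
    move=> S' sS'.
    have sS'X : S' \subset X by apply: subset_trans sS' (subsetDl X S).
    have := hS (S :|: S') ltac:(by rewrite subUset sSX sS'X).
    have dS : #|S :|: S'| = #|S| + #|S'|.
      rewrite cardsU; suff -> : S :&: S' = set0 by rewrite cards0; lia.
      apply/setP => z; rewrite !inE; apply/negbTE/andP => [[z1 z2]].
      by move/subsetP: sS' => /(_ z z2); rewrite inE z1.
    have : #|nbs H (S :|: S')| <= #|nbs H S| + #|nbs H2 S'|.
      apply: card_sub2; apply/subsetP => y /nbsP [x]; rewrite in_setU => /orP [hx hy|hx hy].
        by rewrite in_setU; apply/orP; left; apply/nbsP; exists x.
      case: (boolP (y \in nbs H S)) => hyS; rewrite in_setU; first by rewrite hyS.
      rewrite (negbTE hyS) /=.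
      by apply/nbsP; exists x => //; rewrite /H2 hy hyS.
    lia.
  have [M2 [[g2a g2b g2c] c2]] := IH H2 (X :\: S) 0 cXS cond2.
  exists (M1 :|: M2); split.
    split.
    + move=> p; rewrite inE => /orP [hp|hp].
        by move/andP: (g1a p hp) => [a b]; rewrite b (subsetP sSX _ a).
      move/andP: (g2a p hp) => [a /andP [b _]]; rewrite b andbT.
      by move: a; rewrite inE => /andP [].
    + move=> p q; rewrite !inE => /orP [hp|hp] /orP [hq|hq] e1.
      * exact: g1b.
      * move/andP: (g1a p hp) => [a _]; move/andP: (g2a q hq) => [b _].
        by move: b; rewrite inE -e1 a.
      * move/andP: (g2a p hp) => [a _]; move/andP: (g1a q hq) => [b _].
        by move: a; rewrite inE e1 b.
      * exact: g2b.
    + move=> p q; rewrite !inE => /orP [hp|hp] /orP [hq|hq] e1.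
      * exact: g1c.
      * move/andP: (g1a p hp) => [a b]; move/andP: (g2a q hq) => [_ /andP [_ c]].
        by move: c; rewrite -e1; case/nbsP; exists p.1.
      * move/andP: (g2a p hp) => [_ /andP [_ c]]; move/andP: (g1a q hq) => [a b].
        by move: c; rewrite e1; case/nbsP; exists q.1.
      * exact: g2c.
  rewrite cardsU.
  have -> : M1 :&: M2 = set0.
    apply/setP => p; rewrite !inE; apply/negbTE/andP => [[hp hq]].
    move/andP: (g1a p hp) => [a _]; move/andP: (g2a p hq) => [b _].
    by move: b; rewrite inE a.
  rewrite cards0 subn0.
  have : #|X :\: S| = #|X| - #|S| by rewrite cardD_sub.
  lia.
- move=> hnt.
  have [y hy] : exists y, y \in nbs H X.
    by apply/set0Pn.
  case/nbsP: hy => x hxX hxy.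
  pose H' := fun a b => H a b && (b != y).
  have cX : #|X :\ x| <= s by move: (cardsD1 x X); rewrite hxX; lia.
  have cond : forall S : {set T}, S \subset X :\ x -> #|S| <= #|nbs H' S| + d.
    move=> S sS.
    case: (eqVneq S set0) => [->|nS0]; first by rewrite cards0.
    have sSX : S \subset X by apply: subset_trans sS (subsetDl X _).
    have nSX : S != X.
      apply/eqP => eSX; move/subsetP: sS => /(_ x); rewrite eSX hxX => /(_ isT).
      by rewrite !inE eqxx.
    have : ~~ (#|nbs H S| + d <= #|S|).
      apply/negP => t; move/negP: hnt; apply; apply/existsP; exists S.
      by rewrite sSX nS0 nSX t.
    rewrite -ltnNge => lt.
    have : #|nbs H S| <= 1 + #|nbs H' S|.
      have := card_sub2 (A := nbs H S) (B := [set y]) (C := nbs H' S).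
      rewrite cards1; apply; apply/subsetP => z /nbsP [w hw hwz].
      rewrite !inE; case: (eqVneq z y) => //= nzy.
      by apply/existsP; exists w; rewrite hw /H' hwz nzy.
    lia.
  have [M' [[ga gb gc] c']] := IH H' (X :\ x) d cX cond.
  have nin : (x, y) \notin M'.
    apply/negP => h; move/andP: (ga _ h) => [/= a _]; by move: a; rewrite !inE eqxx.
  exists ((x, y) |: M'); split; last by rewrite cardsU1 nin; move: (cardsD1 x X); rewrite hxX; lia.
  split.
  + move=> p; rewrite in_setU1 => /orP [/eqP ->|hp] /=; first by rewrite hxX hxy.
    move/andP: (ga p hp) => [a /andP [b _]]; rewrite b andbT.
    by move: a; rewrite !inE => /andP [].
  + move=> p q; rewrite !in_setU1 => /orP [/eqP ep|hp] /orP [/eqP eq|hq] e1.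
    * by rewrite ep eq.
    * move/andP: (ga q hq) => [a _]; move: a; rewrite !inE -e1 ep /= eqxx //.
    * move/andP: (ga p hp) => [a _]; move: a; rewrite !inE e1 eq /= eqxx //.
    * exact: gb.
  + move=> p q; rewrite !in_setU1 => /orP [/eqP ep|hp] /orP [/eqP eq|hq] e1.
    * by rewrite ep eq.
    * move/andP: (ga q hq) => [_ /andP [_ a]]; move: a; rewrite -e1 ep /= eqxx //.
    * move/andP: (ga p hp) => [_ /andP [_ a]]; move: a; rewrite e1 eq /= eqxx //.
    * exact: gc.
Qed.

End Gen.


Section Main.
Variables (m n : nat) (T : finType) (e : rel T) (V1 V2 : {set T}) (c : T -> T -> bool).
Hypotheses (hn : 0 < n) (hnm : n < m) (esym : symmetric e)
  (hdisj : [disjoint V1 & V2]) (hcov : V1 :|: V2 = setT)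
  (hbip : forall x y, e x y -> (x \in V1) && (y \in V2) || (x \in V2) && (y \in V1))
  (hV1 : #|V1| = m + n - 1) (hV2 : #|V2| = m + n - 1)
  (hdeg : forall x, 3 * (m + n - 1) < 4 * deg e x) (csym : forall x y, c x y = c y x).

Local Notation N := (m + n - 1).
Local Notation red := (red_sub e c).
Local Notation blue := (blue_sub e c).

Definition Nb x := [set y | e x y].
Lemma degE x : deg e x = #|Nb x|. Proof. by []. Qed.

Definition sides (A B : {set T}) := [/\ [disjoint A & B], #|A| = N, #|B| = N,
  (forall x y, e x y -> x \in A -> y \in B) & (forall x y, e x y -> x \in B -> y \in A)].

Lemma in12 x : (x \in V1) || (x \in V2).
Proof. have : x \in V1 :|: V2 by rewrite hcov inE. by rewrite inE. Qed.

Lemma sides12 : sides V1 V2.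
Proof.
split => // x y h hx.
- by move/orP: (hbip h) => [/andP [_ ->]|/andP [h2 _]] //; rewrite (disjointFr hdisj hx) in h2.
- by move/orP: (hbip h) => [/andP [h2 _]|/andP [_ ->]] //; rewrite (disjointFr hdisj h2) in hx.
Qed.

Lemma sides_sym A B : sides A B -> sides B A.
Proof. case => d a b f g; split => //; by rewrite disjoint_sym. Qed.

Lemma sides21 : sides V2 V1.
Proof. case: sides12 => d a b f g; split => //; by rewrite disjoint_sym. Qed.

Lemma nb_sub A B x : sides A B -> x \in A -> Nb x \subset B.
Proof. case=> _ _ _ f _ hx; apply/subsetP => y; rewrite inE => h; exact: f h hx. Qed.

Lemma cardD_side A B (Y : {set T}) : sides A B -> #|B :\: Y| = N - #|B :&: Y|.
Proof. by case=> _ _ hB _ _; rewrite cardsD hB. Qed.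

Lemma redsym : symmetric red.
Proof. by move=> x y; rewrite /red_sub esym csym. Qed.
Lemma bluesym : symmetric blue.
Proof. by move=> x y; rewrite /blue_sub esym csym. Qed.

Lemma red_e x y : red x y -> e x y. Proof. by case/andP. Qed.
Lemma blue_e x y : blue x y -> e x y. Proof. by case/andP. Qed.
Lemma e_rb x y : e x y -> red x y || blue x y.
Proof. by rewrite /red_sub /blue_sub => ->; case: (c x y). Qed.

Lemma connS (H : rel T) : symmetric H -> forall x y, connect H x y = connect H y x.
Proof. move=> hs; exact: (sym_connect_sym hs). Qed.

Lemma conn_step (H : rel T) r x y : connect H r x -> H x y -> connect H r y.
Proof. by move=> h1 h2; apply: connect_trans h1 (connect1 h2). Qed.

Definition covers (H : rel T) k := forall r, exists J : {set T}, #|J| < k /\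
  forall x y, H x y -> connect H r x -> (x \in J) || (y \in J).

Lemma disj2 (a b c' d : T) : a != c' -> a != d -> b != c' -> b != d ->
  [disjoint [set a; b] & [set c'; d]].
Proof.
move=> h1 h2 h3 h4; rewrite -setI_eq0; apply/eqP/setP => z; rewrite !inE.
apply/negbTE; apply/negP => /andP [/orP [/eqP ->|/eqP ->] /orP [/eqP h|/eqP h]].
all: by move: h1 h2 h3 h4; rewrite h eqxx.
Qed.

Lemma konig (H : rel T) k : symmetric H -> (forall x y, H x y -> e x y) ->
  ~ connected_matching H k -> covers H k.
Proof.
move=> hs he nc r.
pose W := [set x | connect H r x].
pose X := W :&: V1.
case: (boolP [forall S : {set T}, (S \subset X) ==> (#|S| + k <= #|X| + #|nbs H S|)]).
- move/forallP => hall; exfalso; apply: nc.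
  have hc : forall S : {set T}, S \subset X -> #|S| <= #|nbs H S| + (#|X| - k).
    move=> S hS; move/implyP: (hall S) => /(_ hS); lia.
  have [M [g cM]] := hall_def (s := #|X|) (leqnn _) hc.
  have kX : k <= #|X|.
    by move/implyP: (hall set0) => /(_ (sub0set _)); rewrite nbs0 cards0; lia.
  have [M' [sM cM']] := subset_of_card (M := M) (k := k) ltac:(lia).
  have [ga gb gc] := good_sub g sM.
  have side p : p \in M' -> [/\ p.1 \in V1, p.2 \in V2, H p.1 p.2 & p.1 \in W].
    move=> hp; move/andP: (ga p hp) => [hX hH]; move: hX; rewrite inE => /andP [hW h1].
    by split => //; case: sides12 => _ _ _ f _; exact: f (he _ _ hH) h1.
  exists M'; split; last (split => //; exists r => p hp).
  + split => [p hp| p q hp hq npq]; first by case: (side p hp).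
    have [p1 p2 _ _] := side p hp; have [q1 q2 _ _] := side q hq.
    apply: disj2.
    * by apply/eqP => h; move/negP: npq; apply; apply/eqP; exact: gb.
    * by apply/eqP => h; rewrite h (disjointFl hdisj q2) in p1.
    * by apply/eqP => h; rewrite h (disjointFr hdisj q1) in p2.
    * by apply/eqP => h; move/negP: npq; apply; apply/eqP; exact: gc.
  + by case: (side p hp) => _ _ _; rewrite inE.
- rewrite negb_forall => /existsP [S]; rewrite negb_imply -ltnNge => /andP [sSX lt].
  exists ((X :\: S) :|: nbs H S); split.
    apply: leq_ltn_trans (cardU_le _ _) _; rewrite cardD_sub //; have := subset_leq_card sSX; lia.
  move=> x y hxy hrx.
  have hyr : connect H r y by apply: conn_step hrx hxy.
  move/orP: (hbip (he _ _ hxy)) => [/andP [x1 _]|/andP [_ y1]].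
  + have xX : x \in X by rewrite !inE hrx x1.
    case: (boolP (x \in S)) => xS.
      by apply/orP; right; rewrite in_setU; apply/orP; right; apply/nbsP; exists x.
    by apply/orP; left; rewrite in_setU in_setD xS xX.
  + have yX : y \in X by rewrite !inE hyr y1.
    case: (boolP (y \in S)) => yS.
      by apply/orP; left; rewrite in_setU; apply/orP; right; apply/nbsP; exists y => //; rewrite hs.
    by apply/orP; right; rewrite in_setU in_setD yS yX.
Qed.


Lemma sideA A B : sides A B -> #|A| = N. Proof. by case. Qed.
Lemma sideB A B : sides A B -> #|B| = N. Proof. by case. Qed.
Lemma sideD A B : sides A B -> [disjoint A & B]. Proof. by case. Qed.
Lemma sideAB A B x y : sides A B -> e x y -> x \in A -> y \in B.
Proof. by case=> _ _ _ f _; apply: f. Qed.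
Lemma sideBA A B x y : sides A B -> e x y -> x \in B -> y \in A.
Proof. by case=> _ _ _ _ f; apply: f. Qed.

Lemma cardDsub (A X : {set T}) : X \subset A -> #|A :\: X| = #|A| - #|X|.
Proof. by move=> h; rewrite cardsD (setIidPr h). Qed.

Lemma common_nb A B x x' (Y : {set T}) : sides A B -> x \in A -> x' \in A ->
  Y \subset B -> N <= 2 * #|Y| -> exists y, [&& y \in Y, e x y & e x' y].
Proof.
move=> sAB hx hx' hY hYc.
have s1 := nb_sub sAB hx; have s2 := nb_sub sAB hx'.
have hBN := sideB sAB.
have i1 := card_inter s1 s2.
have i2 := card_inter (A := Nb x :&: Nb x') (B := Y) (U := B) (subset_trans (subsetIl _ _) s1) hY.
have d1 := hdeg x; have d2 := hdeg x'; rewrite degE in d1; rewrite degE in d2.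
have : 0 < #|Nb x :&: Nb x' :&: Y| by lia.
case/card_gt0P => y; rewrite !inE => /andP [/andP [h1 h2] h3].
by exists y; rewrite h1 h2 h3.
Qed.

Lemma piece A B (H : rel T) k (X Y : {set T}) : sides A B -> symmetric H -> covers H k -> 0 < k ->
  X \subset A -> Y \subset B -> (forall x y, x \in X -> y \in Y -> e x y -> H x y) ->
  k <= #|X| -> k <= #|Y| -> N <= 2 * #|Y| -> 2 * N + 4 * k < 4 * (#|X| + #|Y|) + 6 -> False.
Proof.
move=> sAB hs hc k0 sX sY hXY kX kY hY ar.
have [x0 hx0] : exists x0, x0 \in X by apply/card_gt0P; lia.
have [J [cJ hJ]] := hc x0.
have conn x : x \in X -> connect H x0 x.
  move=> hx.
  have [y /and3P [yY e1 e2]] := common_nb sAB (subsetP sX _ hx0) (subsetP sX _ hx) sY hY.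
  apply: connect_trans (connect1 (hXY _ _ hx0 yY e1)) _.
  rewrite connS //; apply: connect1; exact: hXY.
have [x /andP [xX xJ]] := not_sub_card (X := X) (J := J) ltac:(lia).
have [y /andP [yY yJ]] := not_sub_card (X := Y) (J := J) ltac:(lia).
have nx : Nb x \subset (B :\: Y) :|: (J :&: B).
  apply/subsetP => z hz.
  have zB := subsetP (nb_sub sAB (subsetP sX _ xX)) _ hz.
  rewrite !inE zB /= andbT; case: (boolP (z \in Y)) => //= zY.
  move: hz; rewrite inE => ez.
  by have := hJ _ _ (hXY _ _ xX zY ez) (conn _ xX); rewrite (negbTE xJ) /= andbT.
have ny : Nb y \subset (A :\: X) :|: (J :&: A).
  apply/subsetP => z hz; move: hz; rewrite inE => ez.
  have zA := sideBA sAB ez (subsetP sY _ yY).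
  rewrite !inE zA /= andbT; case: (boolP (z \in X)) => //= zX.
  have := hJ _ _ (hXY _ _ zX yY ltac:(by rewrite esym)) (conn _ zX).
  by rewrite (negbTE yJ) orbF andbT.
have c1 := card_sub2 nx; have c2 := card_sub2 ny.
rewrite cardDsub // (sideB sAB) in c1; rewrite cardDsub // (sideA sAB) in c2.
have sp := card_split J (sideD sAB).
have d1 := hdeg x; have d2 := hdeg y; rewrite degE in d1; rewrite degE in d2.
have := subset_leq_card sX; have := subset_leq_card sY; rewrite (sideA sAB) (sideB sAB); lia.
Qed.


Lemma Nge : 2 * n <= N. Proof. lia. Qed.

Definition Cr v := [set x | connect red v x].
Definition Cb v := [set x | connect blue v x].

Lemma edge_out v x y : x \notin Cr v -> y \in Cr v -> e x y -> blue x y.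
Proof.
move=> xn yC exy; case/orP: (e_rb exy) => // hr.
exfalso; rewrite !inE in xn yC; apply: (negP xn); apply: conn_step yC _; by rewrite redsym.
Qed.

Section Cov.
Hypotheses (hR : covers red m) (hB : covers blue n).

Lemma huge_side A B v : sides A B -> N <= 2 * #|Cr v :&: B| -> #|A :\: Cr v| < n.
Proof.
move=> sAB h; rewrite ltnNge; apply/negP => hX.
have := Nge => hN.
apply: (piece sAB bluesym hB hn (X := A :\: Cr v) (Y := Cr v :&: B)).
- exact: subsetDl.
- exact: subsetIr.
- move=> x y; rewrite in_setD => /andP [xn _]; rewrite in_setI => /andP [yC _]; exact: edge_out xn yC.
- exact: hX.
- lia.
- exact: h.
- lia.
Qed.

Lemma huge_both v : (N <= 2 * #|Cr v :&: V1|) || (N <= 2 * #|Cr v :&: V2|) ->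
  #|V1 :\: Cr v| < n /\ #|V2 :\: Cr v| < n.
Proof.
have e1 := cardsID (Cr v) V1; have e2 := cardsID (Cr v) V2.
rewrite setIC in e1; rewrite setIC in e2.
case/orP => h.
- have h2 := huge_side sides21 h.
  have h3 : N <= 2 * #|Cr v :&: V2| by lia.
  have h1 := huge_side sides12 h3; by split.
- have h1 := huge_side sides12 h.
  have h3 : N <= 2 * #|Cr v :&: V1| by lia.
  have h2 := huge_side sides21 h3; by split.
Qed.

Section Huge.
Variable v : T.
Hypotheses (P1 : #|V1 :\: Cr v| < n) (P2 : #|V2 :\: Cr v| < n).
Variable K : {set T}.
Hypotheses (cK : #|K| < m) (hK : forall x y, red x y -> connect red v x -> (x \in K) || (y \in K)).

Lemma bl y x : y \in Cr v -> y \notin K -> x \notin K -> e y x -> blue y x.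
Proof.
move=> yC yK xK eyx; case/orP: (e_rb eyx) => // r.
rewrite inE in yC; move: (hK r yC); by rewrite (negbTE yK) (negbTE xK).
Qed.

Lemma CA_big A B : sides A B -> #|A :\: Cr v| < n -> m <= #|Cr v :&: A|.
Proof. move=> sAB h; have := cardsID (Cr v) A; rewrite setIC (sideA sAB); lia. Qed.

Lemma subI3 (A : {set T}) : #|(Cr v :&: A) :\: K| + #|K :&: A| >= #|Cr v :&: A|.
Proof.
have := cardsID K (Cr v :&: A).
have : #|Cr v :&: A :&: K| <= #|K :&: A|.
  apply: subset_leq_card; apply/subsetP => z; rewrite !inE => /andP [/andP [_ a] b]; by rewrite a b.
lia.
Qed.

Lemma huge_i A B : sides A B -> #|B :\: Cr v| < n -> N <= 2 * #|K :&: A| -> False.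
Proof.
move=> sAB PB h.
have hN := Nge.
have cB := CA_big (sides_sym sAB) PB.
have sp := card_split K (sideD sAB).
have i3 := subI3 B.
have dA : #|A :\: K| = N - #|A :&: K| by rewrite cardsD (sideA sAB).
have kA : #|A :&: K| <= #|K :&: A| by rewrite setIC.
apply: (piece sAB bluesym hB hn (X := A :\: K) (Y := (Cr v :&: B) :\: K)).
- exact: subsetDl.
- apply/subsetP => z; rewrite !inE => /andP [_ /andP [_ ->]] //.
- move=> x y; rewrite !inE => /andP [xK _] /andP [yK /andP [yC _]] exy.
  rewrite bluesym; apply: bl => //; first by rewrite inE.
  by rewrite esym.
- lia.
- lia.
- lia.
- lia.
Qed.

Lemma huge_conn A B : sides A B -> 2 * #|K :&: B| < N ->
  forall x x', x \in (Cr v :&: A) :\: K -> x' \in (Cr v :&: A) :\: K -> connect blue x x'.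
Proof.
move=> sAB h x x'; rewrite !in_setD !in_setI => /andP [xK /andP [xC xA]] /andP [x'K /andP [x'C x'A]].
have dB : #|B :\: K| = N - #|B :&: K| by rewrite cardsD (sideB sAB).
have kB : #|B :&: K| = #|K :&: B| by rewrite setIC.
have [y /and3P [yBK e1 e2]] := common_nb sAB xA x'A (subsetDl B K) ltac:(lia).
move: yBK; rewrite in_setD => /andP [yK _].
apply: connect_trans (connect1 (bl xC xK yK e1)) _.
rewrite connS; last exact: bluesym.
apply: connect1; exact: bl x'C x'K yK e2.
Qed.

Lemma huge_cover A B : sides A B -> #|A :\: Cr v| < n ->
  forall r (L : {set T}), #|L| < n ->
  (forall x y, blue x y -> connect blue r x -> (x \in L) || (y \in L)) ->
  (forall x, x \in (Cr v :&: A) :\: K -> connect blue r x) ->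
  (Cr v :&: A) :\: K \subset L.
Proof.
move=> sAB PA r L cL hL hconn; apply/subsetP => x hx; apply/negPn/negP => xL.
have xK : x \notin K by move: hx; rewrite in_setD => /andP [].
have xC : x \in Cr v by move: hx; rewrite !in_setD !in_setI => /andP [_ /andP []].
have xA : x \in A by move: hx; rewrite !in_setD !in_setI => /andP [_ /andP []].
have nx : Nb x \subset (K :&: B) :|: (L :&: B).
  apply/subsetP => z; rewrite inE => ez.
  have zB := sideAB sAB ez xA.
  rewrite !in_setU !in_setI zB !andbT.
  case/orP: (e_rb ez) => hz.
    by move: (hK hz ltac:(by rewrite inE in xC)); rewrite (negbTE xK) /= => ->.
  by move: (hL _ _ hz (hconn _ hx)); rewrite (negbTE xL) /= => ->; rewrite orbT.
have [y /andP [yB yKL]] := not_sub_card (X := B) (J := K :|: L)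
  ltac:(by apply: leq_ltn_trans (cardU_le _ _) _; rewrite (sideB sAB); lia).
move: yKL; rewrite in_setU negb_or => /andP [yK yL].
have ny : Nb y \subset (K :&: A) :|: (L :&: A) :|: (A :\: Cr v).
  apply/subsetP => z; rewrite inE => ez.
  have zA := sideBA sAB ez yB.
  rewrite !in_setU !in_setI !in_setD zA !andbT.
  case: (boolP (z \in Cr v)) => zC; last by rewrite orbT.
  case: (boolP (z \in K)) => zK //=.
  have hz : z \in (Cr v :&: A) :\: K by rewrite in_setD in_setI zK zC zA.
  have bzy : blue z y by apply: bl => //; rewrite esym.
  by move: (hL _ _ bzy (hconn _ hz)); rewrite (negbTE yL) orbF => ->.
have c1 := card_sub2 nx; have c2 := card_sub3 ny.
have s1 := card_split K (sideD sAB); have s2 := card_split L (sideD sAB).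
have d1 := hdeg x; have d2 := hdeg y; rewrite degE in d1; rewrite degE in d2.
have hN := Nge.
lia.
Qed.

Lemma huge_final : False.
Proof.
have hN := Nge.
have s12 := sides12; have s21 := sides21.
case: (leqP N (2 * #|K :&: V1|)) => k1; first exact: huge_i s12 P2 k1.
case: (leqP N (2 * #|K :&: V2|)) => k2; first exact: huge_i s21 P1 k2.
have c1 := CA_big s12 P1; have c2 := CA_big s21 P2.
have [a0 /andP [a0C a0K]] := not_sub_card (X := Cr v :&: V1) (J := K) ltac:(lia).
have [b0 /andP [b0C b0K]] := not_sub_card (X := Cr v :&: V2) (J := K) ltac:(lia).
have ha0 : a0 \in (Cr v :&: V1) :\: K by rewrite in_setD a0C a0K.
have hb0 : b0 \in (Cr v :&: V2) :\: K by rewrite in_setD b0C b0K.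
have [L [cL hL]] := hB a0.
have conA : forall x, x \in (Cr v :&: V1) :\: K -> connect blue a0 x.
  by move=> x hx; apply: huge_conn s12 k2 _ _ ha0 hx.
have subA := huge_cover s12 P1 cL hL conA.
have sp := card_split K (sideD s12).
have i1 := subI3 V1; have i2 := subI3 V2.
case: (boolP (connect blue a0 b0)) => hab.
- have conB : forall y, y \in (Cr v :&: V2) :\: K -> connect blue a0 y.
    move=> y hy; apply: connect_trans hab _; exact: huge_conn s21 k1 _ _ hb0 hy.
  have subB := huge_cover s21 P2 cL hL conB.
  have sL := card_split L (sideD s12).
  have : #|(Cr v :&: V1) :\: K| <= #|L :&: V1|.
    apply: subset_leq_card; apply/subsetP => z hz; rewrite in_setI (subsetP subA _ hz).
    by move: hz; rewrite !in_setD !in_setI => /andP [_ /andP [_ ->]].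
  have : #|(Cr v :&: V2) :\: K| <= #|L :&: V2|.
    apply: subset_leq_card; apply/subsetP => z hz; rewrite in_setI (subsetP subB _ hz).
    by move: hz; rewrite !in_setD !in_setI => /andP [_ /andP [_ ->]].
  lia.
- have noedge : forall x y, x \in (Cr v :&: V1) :\: K -> y \in (Cr v :&: V2) :\: K -> ~~ e x y.
    move=> x y hx hy; apply/negP => exy.
    have xC : x \in Cr v by move: hx; rewrite !in_setD !in_setI => /andP [_ /andP []].
    have xK : x \notin K by move: hx; rewrite in_setD => /andP [].
    have yK : y \notin K by move: hy; rewrite in_setD => /andP [].
    have bxy := bl xC xK yK exy.
    have ay : connect blue a0 y := conn_step (conA _ hx) bxy.
    have yb : connect blue y b0.
      rewrite connS; last exact: bluesym.
      exact: huge_conn s21 k1 _ _ hb0 hy.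
    by move/negP: hab; apply; apply: connect_trans ay yb.
  have na : Nb a0 \subset (K :&: V2) :|: (V2 :\: Cr v).
    apply/subsetP => z; rewrite inE => ez.
    have zB := sideAB s12 ez (subsetP (subsetIr _ _) _ a0C).
    rewrite !in_setU !in_setI !in_setD zB !andbT.
    case: (boolP (z \in K)) => zK //=.
    case: (boolP (z \in Cr v)) => zC //=.
    have hz : z \in (Cr v :&: V2) :\: K by rewrite in_setD in_setI zK zC zB.
    by move: (noedge _ _ ha0 hz); rewrite ez.
  have nb : Nb b0 \subset (K :&: V1) :|: (V1 :\: Cr v).
    apply/subsetP => z; rewrite inE => ez.
    have zA := sideAB s21 ez (subsetP (subsetIr _ _) _ b0C).
    rewrite !in_setU !in_setI !in_setD zA !andbT.
    case: (boolP (z \in K)) => zK //=.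
    case: (boolP (z \in Cr v)) => zC //=.
    have hz : z \in (Cr v :&: V1) :\: K by rewrite in_setD in_setI zK zC zA.
    by move: (noedge _ _ hz hb0); rewrite esym ez.
  have c1' := card_sub2 na; have c2' := card_sub2 nb.
  have d1 := hdeg a0; have d2 := hdeg b0; rewrite degE in d1; rewrite degE in d2.
  lia.
Qed.

End Huge.

Lemma small_side A B v : sides A B -> 2 * #|Cr v :&: A| < N -> #|Cr v :&: B| < n.
Proof.
move=> sAB h; rewrite ltnNge; apply/negP => hX.
have hN := Nge.
have dA : #|A :\: Cr v| = N - #|A :&: Cr v| by rewrite cardsD (sideA sAB).
have eA : #|A :&: Cr v| = #|Cr v :&: A| by rewrite setIC.
apply: (piece (sides_sym sAB) bluesym hB hn (X := Cr v :&: B) (Y := A :\: Cr v)).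
- exact: subsetIr.
- exact: subsetDl.
- move=> x y; rewrite in_setI in_setD => /andP [xC _] /andP [yn _] exy.
  rewrite bluesym; apply: edge_out yn xC _; by rewrite esym.
- exact: hX.
- lia.
- lia.
- lia.
Qed.

Definition Rn x := [set y | red x y].

Section CaseII.
Hypothesis small : forall v, 2 * #|Cr v :&: V1| < N /\ 2 * #|Cr v :&: V2| < N.

Lemma rn_small x : #|Rn x| < n.
Proof.
case/orP: (in12 x) => hx.
- have := small_side sides12 (small x).1.
  apply: leq_ltn_trans; apply: subset_leq_card; apply/subsetP => y; rewrite !inE => r.
  by rewrite connect1 //= (sideAB sides12 (red_e r) hx).
- have := small_side sides21 (small x).2.
  apply: leq_ltn_trans; apply: subset_leq_card; apply/subsetP => y; rewrite !inE => r.
  by rewrite connect1 //= (sideAB sides21 (red_e r) hx).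
Qed.

Lemma rb_conn x x' : x \in V1 -> x' \in V1 -> connect red x x' -> connect blue x x'.
Proof.
move=> hx hx' hr; case: (boolP (connect blue x x')) => // nb; exfalso.
have hN := Nge.
have sS : Nb x :&: Nb x' \subset Cr x :&: V2.
  apply/subsetP => z; rewrite !inE => /andP [ex ex'].
  rewrite (sideAB sides12 ex hx) andbT.
  case/orP: (e_rb ex) => [r|b]; first exact: connect1.
  case/orP: (e_rb ex') => [r'|b']; first exact: conn_step hr r'.
  exfalso; move/negP: nb; apply; apply: connect_trans (connect1 b) _.
  by apply: connect1; rewrite bluesym.
have := small_side sides12 (small x).1.
have := subset_leq_card sS.
have := card_inter (nb_sub sides12 hx) (nb_sub sides12 hx').
have d1 := hdeg x; have d2 := hdeg x'; rewrite degE in d1; rewrite degE in d2.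
rewrite hV2; lia.
Qed.

Lemma same_col a b w : a \in V1 -> b \in V1 -> e a w -> e b w -> c a w = c b w -> connect blue a b.
Proof.
move=> ha hb ea eb hc.
case hca : (c a w).
- apply: rb_conn => //; apply: connect_trans (connect1 (_ : red a w)) (connect1 (_ : red w b)).
  + by rewrite /red_sub ea hca.
  + by rewrite /red_sub esym eb csym -hc hca.
- apply: connect_trans (connect1 (_ : blue a w)) (connect1 (_ : blue w b)).
  + by rewrite /blue_sub ea hca.
  + by rewrite /blue_sub esym eb csym -hc hca.
Qed.

Lemma three x y z : x \in V1 -> y \in V1 -> z \in V1 ->
  [|| connect blue x y, connect blue x z | connect blue y z].
Proof.
move=> hx hy hz.
have dz := hdeg z; rewrite degE in dz.
have [w /and3P [wz ex ey]] := common_nb sides12 hx hy (nb_sub sides12 hz) ltac:(lia).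
move: wz; rewrite inE => ez.
case hcx : (c x w); case hcy : (c y w); case hcz : (c z w).
all: first [ by rewrite (same_col hx hy ex ey) ?hcx ?hcy
           | by rewrite (same_col hx hz ex ez) ?hcx ?hcz ?orbT
           | by rewrite (same_col hy hz ey ez) ?hcy ?hcz ?orbT ].
Qed.

Lemma cov_side u (L : {set T}) : #|L| < n ->
  (forall x y, blue x y -> connect blue u x -> (x \in L) || (y \in L)) ->
  (Cb u :&: V1 \subset L) || (Cb u :&: V2 \subset L).
Proof.
move=> cL hL.
case: (boolP (Cb u :&: V1 \subset L)) => //= /subsetPn [x hx xL].
apply/subsetP => y hy; apply/negPn/negP => yL.
move: hx hy; rewrite !in_setI !inE => /andP [ux x1] /andP [uy y2].
have nx : Nb x \subset Rn x :|: (L :&: V2).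
  apply/subsetP => z; rewrite inE => ez; rewrite !in_setU !in_setI !inE.
  case/orP: (e_rb ez) => [->//|b].
  by move: (hL _ _ b ux); rewrite (negbTE xL) /= => ->; rewrite (sideAB sides12 ez x1) orbT.
have ny : Nb y \subset Rn y :|: (L :&: V1).
  apply/subsetP => z; rewrite inE => ez; rewrite !in_setU !in_setI !inE.
  case/orP: (e_rb ez) => [->//|b].
  by move: (hL _ _ b uy); rewrite (negbTE yL) /= => ->; rewrite (sideAB sides21 ez y2) orbT.
have c1 := card_sub2 nx; have c2 := card_sub2 ny.
have r1 := rn_small x; have r2 := rn_small y.
have sp := card_split L (sideD sides12).
have d1 := hdeg x; have d2 := hdeg y; rewrite degE in d1; rewrite degE in d2.
have hN := Nge.
lia.
Qed.

Lemma rp u w : ~~ connect blue u w -> m <= #|Cb w :&: V1| -> m <= #|Cb u :&: V2| -> False.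
Proof.
move=> nuw hw hu.
have hN := Nge.
apply: (piece sides12 redsym hR (k := m) (X := Cb w :&: V1) (Y := Cb u :&: V2)).
- lia.
- exact: subsetIr.
- exact: subsetIr.
- move=> x y; rewrite !in_setI !inE => /andP [wx _] /andP [uy _] exy.
  case/orP: (e_rb exy) => // b; exfalso; move/negP: nuw; apply.
  apply: connect_trans uy _; rewrite connS; last exact: bluesym.
  exact: conn_step wx b.
- exact: hw.
- exact: hu.
- lia.
- lia.
Qed.

Lemma caseII : False.
Proof.
have hN := Nge.
have [v0 hv0] : exists v0, v0 \in V1 by apply/card_gt0P; rewrite hV1; lia.
case: (boolP [forall x in V1, connect blue v0 x]).
- move/forall_inP => hall.
  have [L [cL hL]] := hB v0.
  have sp := card_split L (sideD sides12).
  have e1 : #|V1 :\: L| = N - #|V1 :&: L| by rewrite cardsD hV1.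
  have e2 : #|V2 :\: L| = N - #|V2 :&: L| by rewrite cardsD hV2.
  have f1 : #|V1 :&: L| = #|L :&: V1| by rewrite setIC.
  have f2 : #|V2 :&: L| = #|L :&: V2| by rewrite setIC.
  apply: (piece sides12 redsym hR (k := m) (X := V1 :\: L) (Y := V2 :\: L)).
  + lia.
  + exact: subsetDl.
  + exact: subsetDl.
  + move=> x y; rewrite !in_setD => /andP [xL x1] /andP [yL _] exy.
    case/orP: (e_rb exy) => // b; exfalso.
    by move: (hL _ _ b (hall _ x1)); rewrite (negbTE xL) (negbTE yL).
  + lia.
  + lia.
  + lia.
  + lia.
- rewrite negb_forall_in => /existsP [v1 /andP [hv1 n01]].
  have allV1 : forall x, x \in V1 -> connect blue v0 x || connect blue v1 x.
    move=> x hx; move: (three hv0 hv1 hx); by rewrite (negbTE n01).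
  have allV2 : forall y, y \in V2 -> connect blue v0 y || connect blue v1 y.
    move=> y hy.
    have dy := hdeg y; rewrite degE in dy.
    have r := rn_small y.
    have [z /andP [zN zR]] := not_sub_card (X := Nb y) (J := Rn y) ltac:(lia).
    move: zN zR; rewrite !inE => ez nr.
    have byz : blue z y.
      rewrite bluesym; case/orP: (e_rb ez) => //; by rewrite (negbTE nr).
    have z1 := sideAB sides21 ez hy.
    by case/orP: (allV1 _ z1) => h; rewrite (conn_step h byz) ?orbT.
  have [L0 [cL0 hL0]] := hB v0.
  have [L1 [cL1 hL1]] := hB v1.
  have u1 : N <= #|Cb v0 :&: V1| + #|Cb v1 :&: V1|.
    rewrite -hV1; apply: card_sub2; apply/subsetP => x hx; rewrite !in_setU !in_setI !inE hx !andbT.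
    exact: allV1.
  have u2 : N <= #|Cb v0 :&: V2| + #|Cb v1 :&: V2|.
    rewrite -hV2; apply: card_sub2; apply/subsetP => x hx; rewrite !in_setU !in_setI !inE hx !andbT.
    exact: allV2.
  have n10 : ~~ connect blue v1 v0 by rewrite connS //; exact: bluesym.
  case/orP: (cov_side cL0 hL0) => s0; case/orP: (cov_side cL1 hL1) => s1.
  all: have c0 := subset_leq_card s0; have c1 := subset_leq_card s1.
  + lia.
  + exact: rp n01 ltac:(lia) ltac:(lia).
  + exact: rp n10 ltac:(lia) ltac:(lia).
  + lia.
Qed.

End CaseII.

End Cov.

Lemma main_contra : ~ connected_matching red m -> ~ connected_matching blue n -> False.
Proof.
move=> nr nb.
have hR := konig redsym red_e nr.
have hB := konig bluesym blue_e nb.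
case: (boolP [exists v, (N <= 2 * #|Cr v :&: V1|) || (N <= 2 * #|Cr v :&: V2|)]).
- case/existsP => v hv.
  have [P1 P2] := huge_both hB hv.
  have [K [cK hK]] := hR v.
  by have := huge_final hB P1 P2 cK hK.
- rewrite negb_exists => /forallP hs.
  apply: caseII hR hB _ => v; move: (hs v); rewrite negb_or -!ltnNge => /andP [a b]; by split.
Qed.


End Main.

Theorem theorem1p5 (m n : nat) (T : finType) (e : rel T) (V1 V2 : {set T})
  (c : T -> T -> bool) :
  0 < n -> n < m ->
  simple_graph e ->
  bipartite_parts e V1 V2 ->
  #|V1| = m + n - 1 -> #|V2| = m + n - 1 ->
  (forall x : T, 3 * (m + n - 1) < 4 * deg e x) ->
  (forall x y, c x y = c y x) ->
  connected_matching (red_sub e c) m \/ connected_matching (blue_sub e c) n.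
Proof.
move=> hn hnm [esym _] [hdisj [hcov hbip]] hV1 hV2 hdeg csym.
case: (Classical_Prop.classic (connected_matching (red_sub e c) m)) => [h|nr]; first by left.
case: (Classical_Prop.classic (connected_matching (blue_sub e c) n)) => [h|nb]; first by right.
exfalso; exact: (main_contra hn hnm esym hdisj hcov hbip hV1 hV2 hdeg csym nr nb).
Qed.
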